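(* Let $A$ be a complex square matrix, $y$ a complex vector, and $k,m\ge1$ integers. Suppose there is a polynomial $P$ of degree at most $k$ with $P(0)=0$ such that the Hermitian part $H=\tfrac12(P(A)^*+P(A))$ of $P(A)$ is positive definite or negative definite. Consider an operator coefficient method of degree $k$ and order $m$ (an iteration producing $x_0,x_1,x_2,\ldots$) whose selection criterion chooses $x_{n+1}$ to minimize the $2$-norm of the residual $\|r_{n+1}\|_2$ (respectively of the error $\|e_{n+1}\|_2$) over its selection set, and whose selection set at each step contains the affine space $$x_n+\operatorname{span}\{r_n,\;Ar_n,\;A^2r_n,\;\ldots,\;A^{k-1}r_n\}.$$ Then the method converges, and at each step the minimized norm declines by at least the factor $$\sqrt{1-\left[\frac{\min|\lambda(H)|}{\|P(A)\|_2}\right]^2}<1,$$ i.e. $\|r_{n+1}\|_2\le \rho\|r_n\|_2$ (respectively $\|e_{n+1}\|_2\le\rho\|e_n\|_2$) with $\rho$ equal to this factor.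
   Context: For an iterate $x_j$, $r_j=y-Ax_j$ is its residual and $e_j=x_*-x_j$ its error, $x_*$ being the exact solution of $Ax=y$. $\lambda(H)$ is the set of eigenvalues of $H$; $\|\cdot\|_2$ is the Euclidean norm and induced matrix norm. An operator coefficient method of degree $k$ and order $m$, oc$(k,m)$, starts from $x_0$ (and optionally $x_{-1},\ldots,x_{1-m}$) and at each step chooses the next iterate, by some selection criterion, from a selection set that is a subset of the span of the vectors $x_{n},x_{n-1},\ldots,x_{n+1-m}$ and $A^{i}r_{n+1-j}$ for $0\le i\le k-1$, $1\le j\le m$ (in the homogeneous case with the coefficients of the $x$-vectors constrained to sum to $1$); the selection set need not use all of these vectors. *)

(* Defs.v *)
From HB Require Import structures.
From mathcomp Require Import all_boot all_order all_algebra.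
From mathcomp Require Import classical_sets boolp reals topology normedtype sequences.
From mathcomp Require Import complex.
Set Implicit Arguments. Unset Strict Implicit. Unset Printing Implicit Defensive.
Import Order.TTheory GRing.Theory Num.Theory.
Local Open Scope ring_scope.
Local Open Scope classical_set_scope.

Section Defs.
Variable R : realType.
Local Notation C := R[i].

Definition ctrmx (p q : nat) (M : 'M[C]_(p, q)) : 'M[C]_(q, p) :=
  map_mx (fun z => conjc z) M^T.

Definition vnorm (p : nat) (v : 'cV[C]_p) : R :=
  Num.sqrt (\sum_(i < p) ComplexField.Normc.normc (v i 0) ^+ 2).

Definition opnorm (p : nat) (M : 'M[C]_p) : R :=
  sup [set vnorm (M *m v) | v in [set v : 'cV[C]_p | vnorm v = 1]].

Definition herm_part (p : nat) (M : 'M[C]_p) : 'M[C]_p :=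
  2%:R^-1 *: (ctrmx M + M).

Definition posdef (p : nat) (H : 'M[C]_p) : Prop :=
  forall v : 'cV[C]_p, v != 0 -> 0 < (ctrmx v *m H *m v) 0 0.

Definition negdef (p : nat) (H : 'M[C]_p) : Prop :=
  forall v : 'cV[C]_p, v != 0 -> (ctrmx v *m H *m v) 0 0 < 0.

Definition min_abs_eig (p : nat) (H : 'M[C]_p) : R :=
  inf [set ComplexField.Normc.normc a | a in [set a : C | eigenvalue H a]].

(* The (linear) span from which an oc(k,m) method picks x_{n+1}:
   span{ x_n,...,x_{n+1-m},  A^i r_{n+1-j} (0<=i<=k-1, 1<=j<=m) },
   with iterates indexed by integers (x_{-1},...,x_{1-m} being the
   optional starting vectors). *)
Definition oc_span (p : nat) (A : 'M[C]_p) (y : 'cV[C]_p)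
    (k m : nat) (x : int -> 'cV[C]_p) (n : nat) : set 'cV[C]_p :=
  [set z | exists (a : 'I_m -> C) (b : 'I_k -> 'I_m -> C),
     z = \sum_(j < m) a j *: x (n%:Z - j%:Z)
       + \sum_(i < k) \sum_(j < m)
            b i j *: (A ^+ i *m (y - A *m x (n%:Z - j%:Z)))].

Definition oc_method (p : nat) (A : 'M[C]_p) (y : 'cV[C]_p) (k m : nat)
    (obj : 'cV[C]_p -> R) (S : nat -> set 'cV[C]_p) (x : int -> 'cV[C]_p) : Prop :=
  forall n : nat,
    S n `<=` oc_span A y k m x n /\
    S n (x (n.+1)%:Z) /\
    (forall z, S n z -> obj (x (n.+1)%:Z) <= obj z).

Definition contains_krylov (p : nat) (A : 'M[C]_p) (y : 'cV[C]_p) (k : nat)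
    (S : nat -> set 'cV[C]_p) (x : int -> 'cV[C]_p) : Prop :=
  forall (n : nat) (c : 'I_k -> C),
    S n (x n%:Z + \sum_(i < k) c i *: (A ^+ i *m (y - A *m x n%:Z))).

End Defs.

(* Main.v *)
Require Import Defs.
From HB Require Import structures.
From mathcomp Require Import all_boot all_order all_algebra.
From mathcomp Require Import classical_sets boolp reals topology normedtype sequences.
From mathcomp Require Import complex.
From mathcomp Require Import ring lra.
Import Order.TTheory GRing.Theory Num.Theory numFieldNormedType.Exports.
Local Open Scope ring_scope.
Local Open Scope classical_set_scope.
Set Implicit Arguments. Unset Strict Implicit. Unset Printing Implicit Defensive.

Section Aux.
Variable R : realType.
Local Notation C := R[i].
Local Notation normc := (@ComplexField.Normc.normc R).
Local Notation "x %:CC" := (real_complex R x) (at level 2, format "x %:CC").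

Definition dot p (u v : 'cV[C]_p) : C := (ctrmx u *m v) 0 0.

Lemma normcE (z : C) : `|z| = (normc z)%:CC.
Proof. by []. Qed.

Lemma conjcE (z : C) : conjc z = Num.conj z.
Proof. by case: z. Qed.

Lemma normc_ge0 (z : C) : 0 <= normc z.
Proof. by case: z => a b; exact: sqrtr_ge0. Qed.

Lemma dotE p (u v : 'cV[C]_p) : dot u v = \sum_i (u i 0)^* * v i 0.
Proof. by rewrite /dot mxE; apply: eq_bigr => i _; rewrite !mxE conjcE. Qed.

Lemma vnorm_ge0 p (v : 'cV[C]_p) : 0 <= vnorm v.
Proof. exact: sqrtr_ge0. Qed.

Lemma vnorm2 p (v : 'cV[C]_p) : vnorm v ^+ 2 = \sum_i normc (v i 0) ^+ 2.
Proof. by rewrite sqr_sqrtr // sumr_ge0 // => i _; rewrite sqr_ge0. Qed.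

Lemma normc2C (z : C) : (normc z ^+ 2)%:CC = z^* * z.
Proof. by rewrite rmorphXn /= -normcE normCKC. Qed.

Lemma dotvv p (v : 'cV[C]_p) : dot v v = (vnorm v ^+ 2)%:CC.
Proof.
rewrite dotE vnorm2 rmorph_sum; apply: eq_bigr => i _.
by rewrite -normCKC normcE rmorphXn.
Qed.

Lemma dotC p (u v : 'cV[C]_p) : dot v u = (dot u v)^*.
Proof.
rewrite !dotE rmorph_sum; apply: eq_bigr => i _.
by rewrite rmorphM /= conjCK mulrC.
Qed.

Lemma dotDr p (u v w : 'cV[C]_p) : dot u (v + w) = dot u v + dot u w.
Proof. rewrite !dotE -big_split; apply: eq_bigr => i _; by rewrite mxE mulrDr. Qed.

Lemma dotZr p (u v : 'cV[C]_p) a : dot u (a *: v) = a * dot u v.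
Proof. rewrite !dotE mulr_sumr; apply: eq_bigr => i _; by rewrite mxE mulrCA. Qed.

Lemma dotNr p (u v : 'cV[C]_p) : dot u (- v) = - dot u v.
Proof. by rewrite -scaleN1r dotZr mulN1r. Qed.

Lemma dotBr p (u v w : 'cV[C]_p) : dot u (v - w) = dot u v - dot u w.
Proof. by rewrite dotDr dotNr. Qed.

Lemma dotDl p (u v w : 'cV[C]_p) : dot (v + w) u = dot v u + dot w u.
Proof. by rewrite dotC dotDr rmorphD /= -!dotC. Qed.

Lemma dotBl p (u v w : 'cV[C]_p) : dot (v - w) u = dot v u - dot w u.
Proof. by rewrite dotC dotBr rmorphB /= -!dotC. Qed.

Lemma dotZl p (u v : 'cV[C]_p) a : dot (a *: v) u = a^* * dot v u.
Proof. by rewrite dotC dotZr rmorphM /= -!dotC. Qed.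

Lemma conj_real (x : R) : (x%:CC)^* = x%:CC.
Proof. by rewrite -conjcE conjc_real. Qed.

Lemma vnorm_eq0 p (v : 'cV[C]_p) : vnorm v = 0 -> v = 0.
Proof.
move=> h; have : vnorm v ^+ 2 = 0 by rewrite h expr0n.
rewrite vnorm2 => /eqP; rewrite psumr_eq0; last by move=> i _; rewrite sqr_ge0.
move=> /allP hv; apply/matrixP => i j; rewrite ord1 mxE.
have /implyP := hv i (mem_index_enum _); rewrite expf_eq0 /= => /(_ isT) /eqP.
exact: ComplexField.Normc.eq0_normc.
Qed.

Lemma vnorm_gt0 p (v : 'cV[C]_p) : v != 0 -> 0 < vnorm v.
Proof.
move=> hv; rewrite lt_neqAle vnorm_ge0 andbT eq_sym; apply/eqP => /vnorm_eq0.
by move/eqP: hv.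
Qed.

Lemma vnorm0 p : vnorm (0 : 'cV[C]_p) = 0.
Proof.
rewrite /vnorm big1 ?sqrtr0 // => i _; rewrite mxE.
by rewrite ComplexField.Normc.normc0 expr0n.
Qed.

Lemma sq_inj (a b : R) : 0 <= a -> 0 <= b -> a ^+ 2 = b ^+ 2 -> a = b.
Proof. by move=> ha hb /eqP; rewrite eqrXn2 // => /eqP. Qed.

Lemma sq_le (a b : R) : 0 <= a -> 0 <= b -> a ^+ 2 <= b ^+ 2 -> a <= b.
Proof. by move=> ha hb; rewrite ler_pXn2r // ?nnegrE. Qed.

Lemma realCI (a b : R) : a%:CC = b%:CC -> a = b.
Proof. exact: complexI. Qed.

Lemma vnormZ p (v : 'cV[C]_p) a : vnorm (a *: v) = normc a * vnorm v.
Proof.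
apply: sq_inj; rewrite ?mulr_ge0 ?vnorm_ge0 ?normc_ge0 //.
apply: realCI; rewrite -dotvv dotZl dotZr dotvv exprMn rmorphM mulrA.
by rewrite rmorphM /= normc2C rmorphXn /= expr2.
Qed.

Lemma vnormN p (v : 'cV[C]_p) : vnorm (- v) = vnorm v.
Proof.
rewrite -scaleN1r vnormZ.
suff -> : normc (-1) = 1 by rewrite mul1r.
by apply: realCI; rewrite -normcE normrN1.
Qed.

Lemma ctrmxK p q (M : 'M[C]_(p, q)) : ctrmx (ctrmx M) = M.
Proof. by apply/matrixP => i j; rewrite !mxE conjcE -conjcE conjcK. Qed.

Lemma ctrmx_mul p q r (A : 'M[C]_(p, q)) (B : 'M[C]_(q, r)) :
  ctrmx (A *m B) = ctrmx B *m ctrmx A.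
Proof.
apply/matrixP => i j; rewrite !mxE conjcE rmorph_sum; apply: eq_bigr => l _.
by rewrite !mxE !conjcE rmorphM /= mulrC.
Qed.

Lemma dot_mul p (u v : 'cV[C]_p) (B : 'M[C]_p) :
  dot u (B *m v) = dot (ctrmx B *m u) v.
Proof. by rewrite /dot ctrmx_mul ctrmxK mulmxA. Qed.

Lemma dot_real p (u : 'cV[C]_p) : (dot u u)^* = dot u u.
Proof. by rewrite dotvv conj_real. Qed.

Lemma dot_proj p (w u : 'cV[C]_p) : dot u u != 0 ->
  dot (w - ((dot w u)^* / dot u u) *: u) (w - ((dot w u)^* / dot u u) *: u)
  = dot w w - dot w u * (dot w u)^* / dot u u.
Proof.
move=> hU; rewrite dotBl !dotBr !dotZl !dotZr [dot u w]dotC.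
rewrite rmorphM /= conjCK fmorphV /= dot_real.
set s := dot w u; set U := dot u u; set W := dot w w.
by field.
Qed.

Lemma realC_div (a b : R) : (a / b)%:CC = a%:CC / b%:CC.
Proof. by rewrite rmorphM /= fmorphV. Qed.

Lemma cauchy_schwarz p (w u : 'cV[C]_p) :
  normc (dot w u) <= vnorm w * vnorm u.
Proof.
have [u0|hu] := eqVneq u 0.
  have -> : dot w u = 0 by rewrite u0 /dot mulmx0 mxE.
  by rewrite u0 vnorm0 mulr0 ComplexField.Normc.normc0.
have hU : dot u u != 0.
  by rewrite dotvv; apply/eqP => /realCI /eqP; rewrite expf_eq0 /= => /eqP/vnorm_eq0/eqP; rewrite (negPf hu).
have := dot_proj w hU; rewrite dotvv.
set s := dot w u => h.
apply: sq_le; rewrite ?mulr_ge0 ?vnorm_ge0 ?normc_ge0 // exprMn.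
have hpos : 0 < vnorm u ^+ 2 by rewrite exprn_gt0 // vnorm_gt0.
have : 0 <= vnorm w ^+ 2 - normc s ^+ 2 / vnorm u ^+ 2.
  have -> : vnorm w ^+ 2 - normc s ^+ 2 / vnorm u ^+ 2 =
            vnorm (w - (s^* / dot u u) *: u) ^+ 2.
    apply: realCI; rewrite h !dotvv rmorphB /=; congr (_ - _).
    by rewrite realC_div normc2C [s^* * s]mulrC.
  exact: sqr_ge0.
rewrite subr_ge0 ler_pdivrMr //.
Qed.

Lemma entry_le p (v : 'cV[C]_p) i : normc (v i 0) <= vnorm v.
Proof.
apply: sq_le; rewrite ?normc_ge0 ?vnorm_ge0 // vnorm2 (bigD1 i) //=.
by rewrite lerDl sumr_ge0 // => j _; rewrite sqr_ge0.
Qed.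

Lemma normc_real (x : R) : 0 <= x -> normc x%:CC = x.
Proof. by move=> hx; rewrite /= expr0n addr0 sqrtr_sqr ger0_norm. Qed.

Lemma mul_bound p (B : 'M[C]_p) :
  exists K, 0 <= K /\ forall v, vnorm (B *m v) <= K * vnorm v.
Proof.
set Ki := fun i => \sum_j normc (B i j).
exists (Num.sqrt (\sum_i Ki i ^+ 2)); split; first exact: sqrtr_ge0.
move=> v; apply: sq_le; rewrite ?mulr_ge0 ?sqrtr_ge0 ?vnorm_ge0 //.
rewrite exprMn [X in _ <= X * _]sqr_sqrtr; last by rewrite sumr_ge0 // => i _; rewrite sqr_ge0.
rewrite [X in X <= _]vnorm2 mulr_suml; apply: ler_sum => i _.
rewrite -exprMn ler_pXn2r ?nnegrE ?normc_ge0 ?mulr_ge0 ?vnorm_ge0 ?sumr_ge0 //;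
  last by move=> j _; rewrite normc_ge0.
rewrite -lecR -normcE mxE rmorphM /= rmorph_sum mulr_suml.
apply: le_trans (ler_norm_sum _ _ _) _; apply: ler_sum => j _.
rewrite normrM normcE; apply: ler_wpM2l; first by rewrite -normcE.
by rewrite normcE lecR entry_le.
Qed.

Lemma opnorm_le p (M : 'M[C]_p) v : vnorm (M *m v) <= opnorm M * vnorm v.
Proof.
have [-> | hv] := eqVneq v 0; first by rewrite mulmx0 vnorm0 mulr0.
have [K [K0 hK]] := mul_bound M.
have hub : has_ubound [set vnorm (M *m v) | v in [set v : 'cV[C]_p | vnorm v = 1]].
  by exists K => _ [u /= hu <-]; rewrite -[K]mulr1 -hu hK.
have vpos := vnorm_gt0 hv.
set c := (vnorm v)^-1.
have hc : 0 <= c by rewrite invr_ge0 vnorm_ge0.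
have hu : vnorm (c%:CC *: v) = 1 by rewrite vnormZ normc_real // mulVf // gt_eqF.
have := ub_le_sup hub (ex_intro2 _ _ (c%:CC *: v) hu erefl).
rewrite -scalemxAr vnormZ normc_real // -/(opnorm M) mulrC ler_pdivrMr //.
Qed.

Lemma ctrmxE p q (M : 'M[C]_(p, q)) : ctrmx M = map_mx Num.conj M^T.
Proof. by apply/matrixP => i j; rewrite !mxE conjcE. Qed.

Lemma herm_part_herm p (M : 'M[C]_p) : herm_part M \is hermsymmx.
Proof.
apply/is_hermitianmxP; rewrite expr0 scale1r.
apply/matrixP => i j; rewrite !mxE rmorphM /= rmorphD /= !conjcE conjCK.
by rewrite fmorphV /= conjC_nat addrC.
Qed.

Lemma ctrmx_eq0 p q (M : 'M[C]_(p, q)) : (ctrmx M == 0) = (M == 0).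
Proof.
apply/eqP/eqP => [h|->]; last by apply/matrixP => i j; rewrite !mxE conjcE rmorph0.
by rewrite -[M]ctrmxK h; apply/matrixP => i j; rewrite !mxE conjcE rmorph0.
Qed.

Lemma dot_gt0 p (w : 'cV[C]_p) : w != 0 -> 0 < dot w w.
Proof. by move=> hw; rewrite dotvv ltcR exprn_gt0 // vnorm_gt0. Qed.

Lemma eig_pos p (H : 'M[C]_p) a : posdef H -> eigenvalue H a -> 0 < a.
Proof.
move=> hH /eigenvalueP [v hv v0].
have w0 : ctrmx v != 0 by rewrite ctrmx_eq0.
have := hH _ w0; rewrite ctrmxK hv -scalemxAl mxE.
have -> : (v *m ctrmx v) 0 0 = dot (ctrmx v) (ctrmx v) by rewrite /dot ctrmxK.
by rewrite pmulr_lgt0 // dot_gt0.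
Qed.

Lemma delta_diag p (D : 'rV[C]_p) j :
  (delta_mx 0 j : 'rV[C]_p) *m diag_mx D = D 0 j *: delta_mx 0 j.
Proof.
apply/matrixP => i k; rewrite mul_mx_diag !mxE.
by rewrite ord1 eqxx /=; case: (eqVneq k j) => [->|hk]; rewrite ?mulr1 ?mul1r ?mulr0 ?mul0r.
Qed.

Lemma eig_quad p (H : 'M[C]_p) a (v : 'rV[C]_p) : v *m H = a *: v ->
  dot (ctrmx v) (H *m ctrmx v) = a * dot (ctrmx v) (ctrmx v).
Proof. by move=> hv; rewrite /dot ctrmxK mulmxA hv -scalemxAl mxE. Qed.

Lemma spec_bound n (H : 'M[C]_n.+1) : H \is hermsymmx -> posdef H ->
  0 < min_abs_eig H /\
  forall w, (min_abs_eig H * vnorm w ^+ 2)%:CC <= dot w (H *m w).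
Proof.
move=> hH hpd.
set P := spectralmx H; set D := spectral_diag H.
have := hermitian_normalmx hH; move/orthomx_spectralP => hHe.
have Pu : P \is unitarymx := spectral_unitarymx H.
have Punit : P \in unitmx := spectral_unit H.
have Pinv : invmx P = ctrmx P by rewrite invmx_unitary // ctrmxE.
have PP' : ctrmx P *m P = 1%:M by rewrite -Pinv mulVmx.
have hquad : forall w, dot w (H *m w) =
    \sum_j D 0 j * (normc ((P *m w) j 0) ^+ 2)%:CC.
  move=> w; rewrite hHe -!mulmxA dot_mul Pinv ctrmxK dotE.
  apply: eq_bigr => j _; rewrite mul_diag_mx normc2C.
  by rewrite [X in _ * X = _]mxE mulrCA.
have hnorm : forall w, vnorm (P *m w) = vnorm w.
  move=> w; apply: sq_inj; rewrite ?vnorm_ge0 //; apply: realCI.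
  by rewrite -!dotvv dot_mul mulmxA PP' mul1mx.
have hlb : forall m, (forall j, m%:CC <= D 0 j) ->
    forall w, (m * vnorm w ^+ 2)%:CC <= dot w (H *m w).
  move=> m hm w; rewrite hquad -(hnorm w) vnorm2 mulr_sumr rmorph_sum.
  apply: ler_sum => j _; rewrite rmorphM /=; apply: ler_wpM2r; last exact: hm.
  by rewrite ler0c sqr_ge0.
have Deig : forall j, eigenvalue H (D 0 j).
  move=> j; apply/eigenvalueP; exists (delta_mx 0 j *m P).
    rewrite [in LHS]hHe !mulmxA -[delta_mx 0 j *m P *m invmx P]mulmxA mulmxV //.
    by rewrite mulmx1 delta_diag scalemxAl.
  apply/eqP => h0.
  have : (delta_mx 0 j : 'rV[C]_n.+1) = 0 by rewrite -[LHS](mulmxK Punit) h0 mul0mx.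
  by move/matrixP/(_ 0 j); rewrite !mxE !eqxx /= => /eqP; rewrite oner_eq0.
have Dpos : forall j, 0 < D 0 j by move=> j; exact: eig_pos hpd (Deig j).
set Dr := fun j => normc (D 0 j).
have DrE : forall j, (Dr j)%:CC = D 0 j by move=> j; rewrite -normcE gtr0_norm.
have Drpos : forall j, 0 < Dr j by move=> j; rewrite -ltcR DrE.
set E := [set normc a | a in [set a : C | eigenvalue H a]].
have Elb : has_lbound E by exists 0 => _ [a _ <-]; exact: normc_ge0.
have muD : forall j, min_abs_eig H <= Dr j.
  by move=> j; apply: ge_inf Elb _ _; exists (D 0 j) => //; exact: Deig.
split; last first.
  by apply: hlb => j; rewrite -DrE lecR.
set c := (\sum_j (Dr j)^-1)^-1.
have Spos : 0 < \sum_j (Dr j)^-1.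
  rewrite (bigD1 ord0) //= ltr_wpDr ?invr_gt0 //.
  by rewrite sumr_ge0 // => j _; rewrite invr_ge0 ltW.
have cpos : 0 < c by rewrite invr_gt0.
have cle : forall j, c%:CC <= D 0 j.
  move=> j; rewrite -DrE lecR -[Dr j]invrK lef_pV2 ?posrE ?invr_gt0 //.
  by rewrite (bigD1 j) //= lerDl sumr_ge0 // => i _; rewrite invr_ge0 ltW.
apply: lt_le_trans cpos _.
apply: lb_le_inf; first by exists (Dr ord0), (D 0 ord0) => //; exact: Deig.
move=> _ [a /eigenvalueP [v hv v0] <-].
have w0 : ctrmx v != 0 by rewrite ctrmx_eq0.
have apos : 0 < a := eig_pos hpd (introT (eigenvalueP) (ex_intro2 _ _ v hv v0)).
have := hlb c cle (ctrmx v); rewrite (eig_quad hv) dotvv -{1}(gtr0_norm apos) normcE.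
rewrite -rmorphM /= lecR ler_pM2r //.
by rewrite exprn_gt0 // vnorm_gt0.
Qed.

Lemma herm_quad p (M : 'M[C]_p) w :
  dot w (herm_part M *m w) = 'Re (dot w (M *m w)).
Proof.
rewrite /herm_part -scalemxAl dotZr mulmxDl dotDr ReE.
by rewrite dot_mul ctrmxK -dotC mulrC addrC.
Qed.

Lemma ratio_ineq (a b m l q : R) : 0 < a -> 0 < b -> 0 < m -> 0 < l ->
  m * a ^+ 2 <= q -> b <= l * a ->
  a ^+ 2 - q ^+ 2 / b ^+ 2 <= a ^+ 2 * (1 - (m / l) ^+ 2).
Proof.
move=> ha hb hm hl hq hbl.
set r := m / l.
have hr : r * l = m by rewrite /r divfK // gt_eqF.
have r0 : 0 < r by rewrite divr_gt0.
have h1 : r * b <= m * a by rewrite -hr -mulrA ler_pM2l.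
have h2 : (r * b) ^+ 2 <= (m * a) ^+ 2.
  have : 0 <= r * b by rewrite mulr_ge0 ?ltW.
  nra.
have h4 : 0 <= m * a ^+ 2 by rewrite mulr_ge0 ?ltW ?exprn_gt0.
have h3 : r ^+ 2 * a ^+ 2 * b ^+ 2 <= q ^+ 2.
  have h5 : (m * a ^+ 2) ^+ 2 <= q ^+ 2 by nra.
  have : a ^+ 2 * (r * b) ^+ 2 <= a ^+ 2 * (m * a) ^+ 2 by rewrite ler_wpM2l // sqr_ge0.
  rewrite !exprMn in h5 * => h6.
  lra.
have hb2 : 0 < b ^+ 2 by rewrite exprn_gt0.
have : r ^+ 2 * a ^+ 2 <= q ^+ 2 / b ^+ 2 by rewrite ler_pdivlMr.
by rewrite mulrBr mulr1 lerD2l lerN2 mulrC.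
Qed.

Lemma step_bound n (M : 'M[C]_n.+1) : posdef (herm_part M) ->
  0 < opnorm M /\
  forall w, exists al : C, vnorm (w - al *: (M *m w)) <=
    Num.sqrt (1 - (min_abs_eig (herm_part M) / opnorm M) ^+ 2) * vnorm w.
Proof.
move=> hpd; have [mupos hmu] := spec_bound (herm_part_herm M) hpd.
set mu := min_abs_eig _ in mupos hmu *; set L := opnorm M.
have key : forall w, mu * vnorm w ^+ 2 <= normc (dot w (M *m w)).
  move=> w; rewrite -lecR -normcE; apply: le_trans (hmu w) _.
  rewrite herm_quad; exact: (leif_Re_Creal _).1.
have Lpos : 0 < L.
  pose w0 := const_mx 1 : 'cV[C]_n.+1.
  have hw0 : w0 != 0.
    by apply/eqP => /matrixP/(_ 0 0); rewrite !mxE => /eqP; rewrite oner_eq0.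
  have := key w0; have := cauchy_schwarz w0 (M *m w0); have := opnorm_le M w0.
  have := vnorm_gt0 hw0; have := vnorm_ge0 (M *m w0).
  set a := vnorm w0; set b := vnorm (M *m w0); set q := normc _.
  move=> hb ha h1 h2 h3.
  have h4 : a * b <= a * (L * a) by rewrite ler_wpM2l // ltW.
  have : mu * a ^+ 2 <= L * a ^+ 2 by rewrite expr2; lra.
  rewrite ler_pM2r ?exprn_gt0 // => hmL.
  exact: lt_le_trans mupos hmL.
split => // w.
have [-> | hw] := eqVneq w 0.
  by exists 0; rewrite mulmx0 scaler0 subr0 vnorm0 mulr0.
set u := M *m w; set s := dot w u.
have hs : mu * vnorm w ^+ 2 <= normc s := key w.
have hwpos := vnorm_gt0 hw.
have hu : u != 0.
  apply/eqP => hu0; move: hs; rewrite /s hu0.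
  have -> : dot w 0 = 0 by rewrite /dot mulmx0 mxE.
  by rewrite ComplexField.Normc.normc0 lt_geF // mulr_gt0 // exprn_gt0.
have hU : dot u u != 0 by rewrite gt_eqF // dot_gt0.
exists (s^* / dot u u).
have heq : vnorm (w - (s^* / dot u u) *: u) ^+ 2 =
           vnorm w ^+ 2 - normc s ^+ 2 / vnorm u ^+ 2.
  apply: realCI; rewrite -dotvv dot_proj // !dotvv rmorphB /=; congr (_ - _).
  by rewrite realC_div normc2C [s^* * s]mulrC.
rewrite -[vnorm (w - _)]ger0_norm ?vnorm_ge0 // -sqrtr_sqr heq.
apply: le_trans (ler_wsqrtr (ratio_ineq hwpos (vnorm_gt0 hu) mupos Lpos hs (opnorm_le M w))) _.
by rewrite sqrtrM ?sqr_ge0 // sqrtr_sqr ger0_norm ?vnorm_ge0 // mulrC.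
Qed.

Lemma key_bound n (M : 'M[C]_n.+1) : posdef (herm_part M) ->
  forall w, min_abs_eig (herm_part M) * vnorm w ^+ 2 <= normc (dot w (M *m w)).
Proof.
move=> hpd w; have [_ hmu] := spec_bound (herm_part_herm M) hpd.
rewrite -lecR -normcE; apply: le_trans (hmu w) _.
rewrite herm_quad; exact: (leif_Re_Creal _).1.
Qed.

Lemma horner_split n (A : 'M[C]_n.+1) (P : {poly C}) k :
  (size P <= k.+1)%N -> P.[0] = 0 ->
  horner_mx A P = (\sum_(i < k) P`_i.+1 *: A ^+ i) *m A /\
  horner_mx A P = A *m (\sum_(i < k) P`_i.+1 *: A ^+ i).
Proof.
move=> hs h0.
have hPQ : P = \poly_(i < k) P`_i.+1 * 'X.
  apply/polyP => j; rewrite coefMX coef_poly; case: j => [|j] /=.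
    by rewrite -horner_coef0.
  case: ltnP => // hj; rewrite nth_default //; exact: leq_trans hs _.
have hQ : horner_mx A (\poly_(i < k) P`_i.+1) = \sum_(i < k) P`_i.+1 *: A ^+ i.
  rewrite poly_def rmorph_sum; apply: eq_bigr => i _.
  by rewrite /= horner_mxZ rmorphXn /= horner_mx_X.
have e1 : horner_mx A P = (\sum_(i < k) P`_i.+1 *: A ^+ i) *m A.
  by rewrite {1}hPQ rmorphM /= horner_mx_X hQ mulmxE.
split => //; rewrite e1 -hQ mulmxE.
have hc := comm_horner_mx2 A (\poly_(i < k) P`_i.+1) 'X.
by rewrite horner_mx_X in hc; exact: hc.
Qed.

Lemma normcN' (z : C) : normc (- z) = normc z.
Proof. by apply: realCI; rewrite -!normcE normrN. Qed.

Lemma eig_opp p (H : 'M[C]_p) a : eigenvalue (- H) a = eigenvalue H (- a).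
Proof.
apply/eigenvalueP/eigenvalueP => [[v hv v0]|[v hv v0]]; exists v => //.
  by rewrite scaleNr -hv mulmxN opprK.
by rewrite mulmxN hv scaleNr opprK.
Qed.

Definition eigset p (H : 'M[C]_p) := [set normc a | a in [set a : C | eigenvalue H a]].
Lemma mae_def p (H : 'M[C]_p) : min_abs_eig H = inf (eigset H).
Proof. by []. Qed.
Lemma eigset_opp p (H : 'M[C]_p) : eigset (- H) = eigset H.
Proof.
  apply/seteqP; split => _ [a ha <-].
    exists (- a); last exact: normcN'.
    by rewrite /= -eig_opp.
  exists (- a); last exact: normcN'.
  by rewrite /= eig_opp opprK.
Qed.
Lemma min_abs_eig_opp p (H : 'M[C]_p) : min_abs_eig (- H) = min_abs_eig H.
Proof. by rewrite !mae_def eigset_opp. Qed.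
Definition opset p (M : 'M[C]_p) :=
  [set vnorm (M *m v) | v in [set v : 'cV[C]_p | vnorm v = 1]].
Lemma opnorm_def p (M : 'M[C]_p) : opnorm M = sup (opset M).
Proof. by []. Qed.
Lemma opset_opp p (M : 'M[C]_p) : opset (- M) = opset M.
Proof.
apply/seteqP; split => _ [v hv <-];
  by exists v => //; rewrite mulNmx vnormN.
Qed.
Lemma opnorm_opp p (M : 'M[C]_p) : opnorm (- M) = opnorm M.
Proof. by rewrite !opnorm_def opset_opp. Qed.

Lemma herm_part_opp p (M : 'M[C]_p) : herm_part (- M) = - herm_part M.
Proof.
rewrite /herm_part -scalerN opprD; congr (_ *: (_ + _)).
by apply/matrixP => i j; rewrite !mxE rmorphN.
Qed.

Lemma negdef_posdef p (H : 'M[C]_p) : negdef H -> posdef (- H).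
Proof. by move=> h v hv; rewrite mulmxN mulNmx mxE oppr_gt0 h. Qed.
End Aux.


Lemma core (R : realType) (N : nat)
    (A : 'M[R[i]]_N.+1) (y : 'cV[R[i]]_N.+1) (k m : nat)
    (P : {poly R[i]}) (hPdeg : (size P <= k.+1)%N) (hP0 : P.[0] = 0)
    (hpd : posdef (herm_part (horner_mx A P)))
    (xs : 'cV[R[i]]_N.+1) (hxs : A *m xs = y)
    (residual_crit : bool)
    (S : nat -> set 'cV[R[i]]_N.+1) (x : int -> 'cV[R[i]]_N.+1) :
  let obj := fun z : 'cV[R[i]]_N.+1 =>
    if residual_crit then vnorm (y - A *m z) else vnorm (xs - z) in
  oc_method A y k m obj S x ->
  contains_krylov A y k S x ->
  let rho := Num.sqrt (1 - (min_abs_eig (herm_part (horner_mx A P))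
                            / opnorm (horner_mx A P)) ^+ 2) in
  rho < 1 /\
  (forall n : nat, obj (x (n.+1)%:Z) <= rho * obj (x n%:Z)) /\
  ((fun n : nat => vnorm (xs - x n%:Z)) @ \oo --> (0 : R)).
Proof.
move=> obj hmeth hkry rho.
have [Lpos hstep] := step_bound hpd.
have [mupos _] := spec_bound (herm_part_herm _) hpd.
have [hM1 hM2] := horner_split A hPdeg hP0.
set M := horner_mx A P in hpd Lpos hstep mupos hM1 hM2 rho *.
set QA := \sum_(i < k) _ in hM1 hM2.
set mu := min_abs_eig _ in mupos rho *.
have rho0 : 0 <= rho by exact: sqrtr_ge0.
have rho1 : rho < 1.
  rewrite /rho -[X in _ < X]sqrtr1 ltr_sqrt //.
  have : 0 < (mu / opnorm M) ^+ 2 by rewrite exprn_gt0 // divr_gt0.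
  lra.
have hobj : forall n : nat, obj (x (n.+1)%:Z) <= rho * obj (x n%:Z).
  move=> n; set xn := x n%:Z.
  pose w := if residual_crit then y - A *m xn else xs - xn.
  have [al hal] := hstep w.
  have hz := hkry n (fun i => al * P`_i.+1).
  apply: le_trans ((hmeth n).2.2 _ hz) _.
  have hsum : \sum_(i < k) (al * P`_i.+1) *: (A ^+ i *m (y - A *m xn)) =
              al *: (QA *m (y - A *m xn)).
    rewrite /QA mulmx_suml scaler_sumr; apply: eq_bigr => i _.
    by rewrite -scalemxAl scalerA.
  have hr : y - A *m xn = A *m (xs - xn) by rewrite mulmxBr hxs.
  rewrite /obj hsum; move: hal; rewrite /w.
  have [hc|hc] := boolP residual_crit; rewrite ?hc ?(negbTE hc) => hal.
    by rewrite mulmxDr -scalemxAr mulmxA -hM2 opprD addrA.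
  by rewrite hr mulmxA -hM1 opprD addrA.
split => //; split => //.
have hgeo : forall n : nat, obj (x n%:Z) <= rho ^+ n * obj (x 0%:Z).
  elim => [|n IH]; first by rewrite expr0 mul1r.
  apply: le_trans (hobj n) _; rewrite exprS -mulrA ler_wpM2l //.
have [K [K0 hK]] : exists K : R, 0 <= K /\
    forall n : nat, vnorm (xs - x n%:Z) <= K * obj (x n%:Z).
  rewrite /obj; have [hc|hc] := boolP residual_crit; rewrite ?hc ?(negbTE hc);
    last by exists 1; split => // n; rewrite mul1r.
  have [KQ [KQ0 hKQ]] := mul_bound QA.
  exists (KQ / mu); split; first by rewrite divr_ge0 // ltW.
  move=> n; set e := xs - x n%:Z.
  have hr : y - A *m x n%:Z = A *m e by rewrite mulmxBr hxs.
  rewrite hr.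
  have h1 := key_bound hpd e.
  have h2 := cauchy_schwarz e (M *m e).
  have h3 : vnorm (M *m e) <= KQ * vnorm (A *m e) by rewrite hM1 -mulmxA hKQ.
  have ha := vnorm_ge0 e; have hb := vnorm_ge0 (A *m e).
  move: h1 h2 h3 ha hb; rewrite -/mu.
  set a := vnorm e; set b := vnorm (A *m e); set q := ComplexField.Normc.normc _; set c := vnorm (M *m e).
  move=> h1 h2 h3 ha hb.
  rewrite mulrAC ler_pdivlMr //.
  have [a0|apos] := eqVneq a 0; first by rewrite a0 mul0r mulr_ge0.
  have apos' : 0 < a by rewrite lt_neqAle eq_sym apos.
  have h4 : a * c <= a * (KQ * b) by rewrite ler_wpM2l.
  have : a * (a * mu) <= a * (KQ * b) by rewrite expr2 in h1; lra.
  by rewrite ler_pM2l.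
apply: (@squeeze_cvgr _ _ _ _ (fun _ => 0) (fun n => K * obj (x 0%:Z) * rho ^+ n)).
- apply: nearW => n; rewrite vnorm_ge0 /=.
  apply: le_trans (hK n) _; rewrite -mulrA ler_wpM2l // mulrC; exact: hgeo.
- exact: cvg_cst.
- rewrite -[X in _ --> X](mulr0 (K * obj (x 0%:Z))).
  apply: cvgMl_tmp; apply: cvg_expr; rewrite ger0_norm //.
Qed.


Unset Implicit Arguments.

Theorem mainTheorem2 (R : realType) (N : nat)
    (A : 'M[R[i]]_N.+1) (y : 'cV[R[i]]_N.+1) (k m : nat)
    (hk : (1 <= k)%N) (hm : (1 <= m)%N)
    (P : {poly R[i]}) (hPdeg : (size P <= k.+1)%N) (hP0 : P.[0] = 0)
    (hdef : posdef (herm_part (horner_mx A P)) \/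
            negdef (herm_part (horner_mx A P)))
    (xs : 'cV[R[i]]_N.+1) (hxs : A *m xs = y)
    (residual_crit : bool)
    (S : nat -> set 'cV[R[i]]_N.+1) (x : int -> 'cV[R[i]]_N.+1) :
  let obj := fun z : 'cV[R[i]]_N.+1 =>
    if residual_crit then vnorm (y - A *m z) else vnorm (xs - z) in
  oc_method A y k m obj S x ->
  contains_krylov A y k S x ->
  let rho := Num.sqrt (1 - (min_abs_eig (herm_part (horner_mx A P))
                            / opnorm (horner_mx A P)) ^+ 2) in
  rho < 1 /\
  (forall n : nat, obj (x (n.+1)%:Z) <= rho * obj (x n%:Z)) /\
  ((fun n : nat => vnorm (xs - x n%:Z)) @ \oo --> (0 : R)).
Proof.
case: hdef => [hpd|hnd]; first exact: core.
have hpd' : posdef (herm_part (horner_mx A (- P))).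
  by rewrite rmorphN /= herm_part_opp; exact: negdef_posdef.
have hs' : (size (- P) <= k.+1)%N by rewrite size_polyN.
have h0' : (- P).[0] = 0 by rewrite hornerN hP0 oppr0.
have := @core R N A y k m (- P) hs' h0' hpd' xs hxs residual_crit S x.
by rewrite rmorphN /= herm_part_opp min_abs_eig_opp opnorm_opp.
Qed.
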